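(* Under the partial cost model, for every positive integer $k$ there is a request sequence $\sigma$ on a list of two items with $\mathrm{TS}(\sigma)=\mathrm{MTFO}(\sigma)=\mathrm{MTFE}(\sigma)=10k$ and $\mathrm{OPT}(\sigma)\le 6k$; in particular each of TS, MTFO and MTFE has cost at least $\frac{5}{3}\mathrm{OPT}(\sigma)$ on these sequences. (Hence the bound $\frac53$ of the best of the three algorithms is tight in the partial cost model.)
   Context: Static list update: serving a request to the item at position $i$ costs $i-1$ (partial cost model); the accessed item may be moved closer to the front for free; two adjacent items may be swapped at cost $1$. $A(\sigma)$ is the total cost of algorithm $A$ and $\mathrm{OPT}(\sigma)$ the minimum cost of any offline algorithm from the same initial list. MTFO moves a requested item to the front on the 1st, 3rd, 5th, ... request to that item; MTFE on the 2nd, 4th, 6th, ... request; otherwise they leave it in place. TS (Timestamp): on a request to item $x$, if $x$ has been requested before and some item preceding $x$ has been requested at most once since the previous request to $x$, then $x$ is moved to immediately in front of the frontmost such item; otherwise nothing moves. These three algorithms make no paid exchanges. *)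

(* Defs.v *)
From mathcomp Require Import all_boot.
Set Implicit Arguments. Unset Strict Implicit. Unset Printing Implicit Defensive.

Section ListUpdate.
Variable T : eqType.

(* Lists are [seq T]; positions are 0-based, so serving a request to the
   item at (1-based) position i costs i-1 = [index x L]  (partial cost model). *)

Definition move_to (x : T) (j : nat) (L : seq T) : seq T :=
  let r := rem x L in take j r ++ x :: drop j r.

(* Paid exchange of the adjacent items at (0-based) positions i and i+1
   (a no-op if i+1 is out of range). *)
Definition swap_adj (L : seq T) (i : nat) : seq T :=
  take i L ++ rev (take 2 (drop i L)) ++ drop i.+2 L.

(* MTFO (b = true) / MTFE (b = false): on a request to x that is the
   c-th request to x (c >= 1), move x to the front iff odd c = b.
   h = past requests (in order). Returns the total cost. *)
Fixpoint mtf_parity_cost (b : bool) (h L sigma : seq T) : nat :=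
  match sigma with
  | [::] => 0
  | x :: sigma' =>
      let c := (count_mem x h).+1 in
      let L' := if odd c == b then move_to x 0 L else L in
      index x L + mtf_parity_cost b (rcons h x) L' sigma'
  end.

Definition MTFO (L0 sigma : seq T) : nat := mtf_parity_cost true [::] L0 sigma.
Definition MTFE (L0 sigma : seq T) : nat := mtf_parity_cost false [::] L0 sigma.

(* TS: if x was requested before and some item preceding x has been
   requested at most once since the previous request to x, move x to
   immediately in front of the frontmost such item. *)
Definition ts_update (h L : seq T) (x : T) : seq T :=
  if x \in h then
    let since := take (index x (rev h)) (rev h) in
    let cands := [seq y <- take (index x L) L | count_mem y since <= 1] in
    if cands is y :: _ then move_to x (index y L) L else L
  else L.

Fixpoint ts_cost (h L sigma : seq T) : nat :=
  match sigma with
  | [::] => 0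
  | x :: sigma' => index x L + ts_cost (rcons h x) (ts_update h L x) sigma'
  end.

Definition TS (L0 sigma : seq T) : nat := ts_cost [::] L0 sigma.

(* A general offline algorithm: for each request, a sequence of paid adjacent
   exchanges (positions), performed before serving (cost 1 each), then the
   request is served, then the accessed item is moved for free to position
   min j (its current position), i.e. closer to the front. *)
Definition offline_step := (seq nat * nat)%type.

Fixpoint offline_cost (L sigma : seq T) (A : seq offline_step) : nat :=
  match sigma, A with
  | x :: sigma', (sw, j) :: A' =>
      let L1 := foldl swap_adj L sw in
      size sw + index x L1
        + offline_cost (move_to x (minn j (index x L1)) L1) sigma' A'
  | _, _ => 0
  end.

Definition OPT_le (L0 sigma : seq T) (n : nat) : Prop :=
  exists A : seq offline_step, size A = size sigma /\ offline_cost L0 sigma A <= n.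

End ListUpdate.

(* Main.v *)
Require Import Defs.
From mathcomp Require Import all_boot.
Set Implicit Arguments.

Section Aux.
Variable T : eqType.

Fixpoint ts_final (h L sigma : seq T) : seq T :=
  match sigma with
  | [::] => L
  | x :: s => ts_final (rcons h x) (ts_update h L x) s
  end.

Lemma ts_cost_cat h L s1 s2 :
  ts_cost h L (s1 ++ s2) = ts_cost h L s1 + ts_cost (h ++ s1) (ts_final h L s1) s2.
Proof.
elim: s1 h L => [|x s1 IH] h L /=; first by rewrite cats0.
by rewrite IH -addnA cat_rcons.
Qed.

Fixpoint mtf_final (b : bool) (h L sigma : seq T) : seq T :=
  match sigma with
  | [::] => L
  | x :: s => mtf_final b (rcons h x)
       (if odd (count_mem x h).+1 == b then move_to x 0 L else L) s
  end.

Lemma mtf_cost_cat b h L s1 s2 :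
  mtf_parity_cost b h L (s1 ++ s2) =
  mtf_parity_cost b h L s1 + mtf_parity_cost b (h ++ s1) (mtf_final b h L s1) s2.
Proof.
elim: s1 h L => [|x s1 IH] h L /=; first by rewrite cats0.
by rewrite IH -addnA cat_rcons.
Qed.

Fixpoint off_final (L sigma : seq T) (A : seq offline_step) : seq T :=
  match sigma, A with
  | x :: sigma', (sw, j) :: A' =>
      let L1 := foldl (@swap_adj T) L sw in
      off_final (move_to x (minn j (index x L1)) L1) sigma' A'
  | _, _ => L
  end.

Lemma off_cost_cat L s1 s2 A1 A2 : size A1 = size s1 ->
  offline_cost L (s1 ++ s2) (A1 ++ A2) =
  offline_cost L s1 A1 + offline_cost (off_final L s1 A1) s2 A2.
Proof.
elim: s1 A1 L => [|x s1 IH] [|[sw j] A1] L //= [] HA.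
by rewrite IH // addnA.
Qed.
End Aux.
Arguments ts_final {T}. Arguments mtf_final {T}. Arguments off_final {T}.

Lemma ts_hist (h0 p L s : seq bool) : false \in p -> true \in p ->
  ts_cost (h0 ++ p) L s = ts_cost p L s.
Proof.
elim: s p L => [|x s IH] p L //= Hf Ht.
have Hx : x \in p by case: x.
have -> : ts_update (h0 ++ p) L x = ts_update p L x.
  rewrite /ts_update mem_cat Hx orbT rev_cat index_cat.
  have Hr : x \in rev p by rewrite mem_rev.
  rewrite Hr take_cat size_rev -(size_rev p) index_mem Hr //.
rewrite rcons_cat IH //; by rewrite mem_rcons inE ?Hf ?Ht orbT.
Qed.

Lemma mtf_hist b (h0 p L s : seq bool) :
  ~~ odd (count_mem true h0) -> ~~ odd (count_mem false h0) ->
  mtf_parity_cost b (h0 ++ p) L s = mtf_parity_cost b p L s.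
Proof.
move=> Ht Hf.
elim: s p L => [|x s IH] p L //=.
have -> : odd (count_mem x (h0 ++ p)) = odd (count_mem x p).
  by rewrite count_cat /= !oddD; case: x; rewrite ?(negPf Ht) ?(negPf Hf).
by rewrite rcons_cat IH.
Qed.

Definition w : seq bool :=
  [:: false; true; false; false; false; true; false; true;
      false; true; false; true; false; true; false; false].

Definition L0 : seq bool := [:: false; true].

Definition sig k := flatten (nseq k w).

Lemma ts_w k : ts_cost w L0 (sig k) = 10 * k.
Proof.
elim: k => [|k IH]; first by [].
have -> : sig k.+1 = w ++ sig k by [].
rewrite ts_cost_cat.
have -> : ts_final w L0 w = L0 by vm_compute.
have -> : ts_cost w L0 w = 10 by vm_compute.
by rewrite ts_hist // IH mulnS.
Qed.

Lemma mtf_w b k : mtf_parity_cost b w L0 (sig k) = 10 * k.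
Proof.
elim: k => [|k IH]; first by [].
have -> : sig k.+1 = w ++ sig k by [].
rewrite mtf_cost_cat.
have -> : mtf_final b w L0 w = L0 by case: (b); vm_compute.
have -> : mtf_parity_cost b w L0 w = 10 by case: (b); vm_compute.
by rewrite mtf_hist // IH mulnS.
Qed.

Definition a : seq offline_step := nseq 16 ([::], 1).

Lemma off_w k : offline_cost L0 (sig k) (flatten (nseq k a)) = 6 * k.
Proof.
elim: k => [|k IH]; first by [].
have -> : sig k.+1 = w ++ sig k by [].
have -> : flatten (nseq k.+1 a) = a ++ flatten (nseq k a) by [].
rewrite off_cost_cat //.
have -> : off_final L0 w a = L0 by vm_compute.
have -> : offline_cost L0 w a = 6 by vm_compute.
by rewrite IH mulnS.
Qed.

Lemma size_sig k : size (sig k) = 16 * k.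
Proof. elim: k => [|k IH]; first by [].
have -> : sig k.+1 = w ++ sig k by []. by rewrite size_cat IH mulnS. Qed.

Lemma size_a k : size (flatten (nseq k a)) = 16 * k.
Proof. elim: k => [|k IH]; first by [].
have -> : flatten (nseq k.+1 a) = a ++ flatten (nseq k a) by []. by rewrite size_cat IH mulnS. Qed.

Theorem theorem4 (k : nat) (hk : 0 < k) :
  exists (L0 sigma : seq bool),
    perm_eq L0 [:: false; true] /\
    TS L0 sigma = 10 * k /\ MTFO L0 sigma = 10 * k /\ MTFE L0 sigma = 10 * k /\
    OPT_le L0 sigma (6 * k).
Proof.
case: k hk => [|k] // _.
exists L0, (sig k.+1).
split; first by [].
have Eq : sig k.+1 = w ++ sig k by [].
split.
  rewrite /TS Eq ts_cost_cat.
  have -> : ts_final [::] L0 w = L0 by vm_compute.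
  have -> : ts_cost [::] L0 w = 10 by vm_compute.
  by rewrite cat0s ts_w mulnS.
split.
  rewrite /MTFO Eq mtf_cost_cat.
  have -> : mtf_final true [::] L0 w = L0 by vm_compute.
  have -> : mtf_parity_cost true [::] L0 w = 10 by vm_compute.
  by rewrite cat0s mtf_w mulnS.
split.
  rewrite /MTFE Eq mtf_cost_cat.
  have -> : mtf_final false [::] L0 w = L0 by vm_compute.
  have -> : mtf_parity_cost false [::] L0 w = 10 by vm_compute.
  by rewrite cat0s mtf_w mulnS.
exists (flatten (nseq k.+1 a)); split.
  by rewrite size_a size_sig.
by rewrite off_w.
Qed.
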